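(* For every positive integer $k$, $$\int_0^{\pi/2} x^2\cos^{2k-1}(x)\,dx = \frac14\,\frac{4^k H_k^{(2)}}{k\binom{2k}{k}}-\frac{4^k H_{2k}^{(2)}}{k\binom{2k}{k}}+\frac34\zeta(2)\,\frac{4^k}{k\binom{2k}{k}}.$$
   Context: For positive integers $n$, $H_n^{(2)}=\sum_{j=1}^n j^{-2}$ is the generalized harmonic number of order $2$; $\binom{2k}{k}$ is the central binomial coefficient and $\zeta$ is the Riemann zeta function. *)

(* Defs.v *)
From Stdlib Require Import Reals.
From Coquelicot Require Import Coquelicot.
Open Scope R_scope.

Definition H2 (n : nat) : R := sum_n_m (fun j => / (INR j ^ 2)) 1 n.

Definition zeta2 : R := Series (fun n => / (INR (S n) ^ 2)).

(* Main.v *)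
Require Import Defs.
From Stdlib Require Import Reals.
From Coquelicot Require Import Coquelicot.
Open Scope R_scope.
From Stdlib Require Import Reals Lra Lia Nsatz.
From Coquelicot Require Import Coquelicot.
Require Import Defs.
Open Scope R_scope.

Definition W n : R := RInt (fun x => cos x ^ n) 0 (PI/2).
Definition J n : R := RInt (fun x => x^2 * cos x ^ n) 0 (PI/2).

Lemma exW n : ex_RInt (fun x => cos x ^ n) 0 (PI/2).
Proof. apply (ex_RInt_continuous (V:=R_CompleteNormedModule)); intros; apply (ex_derive_continuous (K:=R_AbsRing) (V:=R_NormedModule)); auto_derive; easy. Qed.
Lemma exJ n : ex_RInt (fun x => x^2 * cos x ^ n) 0 (PI/2).
Proof. apply (ex_RInt_continuous (V:=R_CompleteNormedModule)); intros; apply (ex_derive_continuous (K:=R_AbsRing) (V:=R_NormedModule)); auto_derive; easy. Qed.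

Lemma lin2 (f g : R -> R) a b (al be : R) : ex_RInt f a b -> ex_RInt g a b ->
  RInt (fun x => al * f x + be * g x) a b = al * RInt f a b + be * RInt g a b.
Proof.
  intros Hf Hg. apply is_RInt_unique.
  exact (is_RInt_plus _ _ a b _ _ (is_RInt_scal _ a b al _ (RInt_correct f a b Hf))
     (is_RInt_scal _ a b be _ (RInt_correct g a b Hg))).
Qed.

Lemma lin3 (f g h : R -> R) a b (al be ga : R) : ex_RInt f a b -> ex_RInt g a b -> ex_RInt h a b ->
  RInt (fun x => al * f x + (be * g x + ga * h x)) a b = al * RInt f a b + (be * RInt g a b + ga * RInt h a b).
Proof.
  intros Hf Hg Hh. apply is_RInt_unique.
  exact (is_RInt_plus _ _ a b _ _ (is_RInt_scal _ a b al _ (RInt_correct f a b Hf))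
    (is_RInt_plus _ _ a b _ _ (is_RInt_scal _ a b be _ (RInt_correct g a b Hg))
     (is_RInt_scal _ a b ga _ (RInt_correct h a b Hh)))).
Qed.

Lemma FTC (F f : R -> R) a b : (forall x, is_derive F x (f x)) -> (forall x, continuous f x) ->
  RInt f a b = F b - F a.
Proof.
  intros HF Hc. apply is_RInt_unique. apply (is_RInt_derive (V:=R_CompleteNormedModule) F f a b); intros; auto.
Qed.

Lemma W_rec m : (INR m + 2) * W (m+2) = (INR m + 1) * W m.
Proof.
  assert (H : RInt (fun x => (INR m + 2) * cos x ^ (m+2) + (- (INR m + 1)) * cos x ^ m) 0 (PI/2) = 0).
  { rewrite (FTC (fun x => sin x * cos x ^ (m+1))).
    - rewrite cos_PI2, sin_0. rewrite pow_add. simpl. ring.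
    - intros x. auto_derive. easy.
      replace (Init.Nat.pred (m+1)) with m by lia.
      rewrite !pow_add, !plus_INR. simpl. pose proof (sin2_cos2 x) as Hs. unfold Rsqr in Hs.
      nsatz.
    - intros; apply (ex_derive_continuous (K:=R_AbsRing) (V:=R_NormedModule)); auto_derive; easy. }
  rewrite (lin2 (fun x => cos x^(m+2)) (fun x => cos x^m)) in H by apply exW. unfold W. lra.
Qed.

Lemma J_rec m : (INR m + 2)^2 * J (m+2) = (INR m + 2) * (INR m + 1) * J m - 2 * W (m+2).
Proof.
  assert (H : RInt (fun x => (INR m + 2)^2 * (x^2 * cos x ^ (m+2)) +
      ((- ((INR m + 2) * (INR m + 1))) * (x^2 * cos x ^ m) + 2 * cos x ^ (m+2))) 0 (PI/2) = 0).
  { rewrite (FTC (fun x => x^2 * ((INR m + 2) * cos x ^ (m+1) * sin x) + 2 * x * cos x ^ (m+2))).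
    - rewrite cos_PI2, sin_0. rewrite !pow_add. simpl. ring.
    - intros x. auto_derive. easy.
      replace (Init.Nat.pred (m+1)) with m by lia. replace (Init.Nat.pred (m+2)) with (m+1)%nat by lia.
      rewrite !pow_add, !plus_INR. simpl. pose proof (sin2_cos2 x) as Hs. unfold Rsqr in Hs.
      apply Rminus_diag_uniq.
      transitivity (-(x^2*(INR m+2)*(INR m+1)*cos x^m) * (sin x * sin x + cos x * cos x - 1)).
      ring. rewrite Hs; ring.
    - intros; apply (ex_derive_continuous (K:=R_AbsRing) (V:=R_NormedModule)); auto_derive; easy. }
  rewrite (lin3 (fun x => x^2 * cos x^(m+2)) (fun x => x^2*cos x^m) (fun x => cos x^(m+2))) in H; [ | apply exJ | apply exJ | apply exW]. unfold W, J. lra.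
Qed.

Lemma W0 : W 0 = PI/2.
Proof. unfold W. rewrite (FTC (fun x => x)). lra. intros; auto_derive; try easy; simpl; field.
  intros; apply (ex_derive_continuous (K:=R_AbsRing) (V:=R_NormedModule)); auto_derive; easy. Qed.
Lemma W1 : W 1 = 1.
Proof. unfold W. rewrite (FTC sin). rewrite sin_PI2, sin_0. lra. intros; auto_derive; try easy; simpl; field. 
  intros; apply (ex_derive_continuous (K:=R_AbsRing) (V:=R_NormedModule)); auto_derive; easy. Qed.
Lemma J0 : J 0 = (PI/2)^3/3.
Proof. unfold J. rewrite (FTC (fun x => x^3/3)). simpl; field. intros; auto_derive; try easy; simpl; field.
  intros; apply (ex_derive_continuous (K:=R_AbsRing) (V:=R_NormedModule)); auto_derive; easy. Qed.
Lemma J1 : J 1 = (PI/2)^2 - 2.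
Proof. unfold J. rewrite (FTC (fun x => x^2 * sin x + 2 * x * cos x - 2 * sin x)).
  rewrite sin_PI2, sin_0, cos_PI2, cos_0. simpl; field.
  intros; auto_derive; try easy; simpl; field.
  intros; apply (ex_derive_continuous (K:=R_AbsRing) (V:=R_NormedModule)); auto_derive; easy. Qed.

Lemma H2_S n : H2 (S n) = H2 n + / (INR (S n))^2.
Proof.
  unfold H2. destruct n.
  - rewrite sum_n_n, sum_n_m_zero by lia. simpl. change (zero : R) with 0. ring.
  - rewrite sum_n_Sm by lia. reflexivity.
Qed.

Lemma H2_0 : H2 0 = 0.
Proof. unfold H2. rewrite sum_n_m_zero by lia. reflexivity. Qed.

Lemma Wpos n : 0 < W (2*n).
Proof.
  induction n.
  - simpl. rewrite W0. pose proof PI_RGT_0. lra.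
  - replace (2 * S n)%nat with (2*n+2)%nat by lia.
    pose proof (W_rec (2*n)) as h. pose proof (pos_INR (2*n)).
    apply (Rmult_lt_reg_l (INR (2*n) + 2)). lra.
    rewrite h. rewrite Rmult_0_r. apply Rmult_lt_0_compat; lra.
Qed.

Lemma xcos x : 0 <= x <= PI/2 -> x * cos x <= sin x.
Proof.
  intros Hx.
  assert (E : RInt (fun t => t * sin t) 0 x = (sin x - x * cos x) - (sin 0 - 0 * cos 0)).
  { apply (FTC (fun t => sin t - t * cos t)).
    - intros t. auto_derive; try easy; simpl; ring.
    - intros; apply (ex_derive_continuous (K:=R_AbsRing) (V:=R_NormedModule)); auto_derive; easy. }
  rewrite sin_0, cos_0 in E.
  assert (G : 0 <= RInt (fun t => t * sin t) 0 x).
  { apply (is_RInt_ge_0 (fun t => t * sin t) 0 x). lra.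
    apply (RInt_correct (V:=R_CompleteNormedModule)).
    apply (ex_RInt_continuous (V:=R_CompleteNormedModule)). intros;
    apply (ex_derive_continuous (K:=R_AbsRing) (V:=R_NormedModule)); auto_derive; easy.
    intros t Ht. apply Rmult_le_pos. lra. apply sin_ge_0; pose proof PI_RGT_0; lra. }
  lra.
Qed.

Lemma Jnonneg n : 0 <= J (2*n+2).
Proof.
  apply (is_RInt_ge_0 (fun x => x^2 * cos x ^ (2*n+2)) 0 (PI/2)). pose proof PI_RGT_0; lra.
  apply (RInt_correct (V:=R_CompleteNormedModule)). apply exJ.
  intros t Ht. apply Rmult_le_pos. apply pow2_ge_0. apply pow_le. apply cos_ge_0; lra.
Qed.

Lemma Jbound n : J (2*n+2) <= W (2*n) - W (2*n+2).
Proof.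
  replace (W (2*n) - W (2*n+2)) with (1 * W (2*n) + (-1) * W (2*n+2)) by ring.
  unfold W. rewrite <- (lin2 (fun x => cos x ^ (2*n)) (fun x => cos x ^ (2*n+2))) by apply exW.
  apply RInt_le. pose proof PI_RGT_0; lra. apply exJ.
  apply (ex_RInt_continuous (V:=R_CompleteNormedModule)). intros;
    apply (ex_derive_continuous (K:=R_AbsRing) (V:=R_NormedModule)); auto_derive; easy.
  intros x Hx. rewrite pow_add.
  assert (Hc : 0 <= cos x) by (apply cos_ge_0; lra).
  assert (Hp : 0 <= cos x ^ (2*n)) by (apply pow_le; lra).
  assert (Hxc : x * cos x <= sin x) by (apply xcos; lra).
  assert (Hxc0 : 0 <= x * cos x) by (apply Rmult_le_pos; lra).
  pose proof (sin2_cos2 x) as Hs. unfold Rsqr in Hs.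
  assert (K : (x * cos x) * (x * cos x) <= sin x * sin x) by (apply Rmult_le_compat; lra).
  assert (K2 : cos x ^ (2*n) * ((x * cos x) * (x * cos x)) <= cos x ^ (2*n) * (sin x * sin x))
    by (apply Rmult_le_compat_l; lra).
  replace (x^2 * (cos x^(2*n) * cos x^2)) with (cos x^(2*n) * ((x*cos x)*(x*cos x))) by ring.
  replace (1 * cos x ^ (2*n) + -1 * (cos x^(2*n) * cos x^2)) with (cos x^(2*n) * (sin x * sin x)).
  exact K2.
  replace (sin x * sin x) with (1 - cos x * cos x) by lra. ring.
Qed.

Lemma Erel n : J (2*n) = W (2*n) * (PI^2/12 - H2 n / 2).
Proof.
  induction n.
  - simpl. rewrite J0, W0, H2_0. field.
  - replace (2 * S n)%nat with (2*n+2)%nat by lia.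
    pose proof (J_rec (2*n)) as h1. pose proof (W_rec (2*n)) as h2.
    rewrite IHn in h1. rewrite H2_S. rewrite S_INR. rewrite mult_INR in h1, h2.
    simpl INR in h1, h2. pose proof (pos_INR n).
    replace (1 + 1) with 2 in h1, h2 by ring.
    apply (Rmult_eq_reg_l ((2 * INR n + 2)^2)).
    2: { apply pow_nonzero. lra. }
    rewrite h1.
    replace ((2 * INR n + 2) * (2 * INR n + 1) * (W (2 * n) * (PI ^ 2 / 12 - H2 n / 2)))
      with ((2 * INR n + 2) * (PI ^ 2 / 12 - H2 n / 2) * ((2 * INR n + 1) * W (2 * n))) by ring.
    rewrite <- h2. field. lra.
Qed.

Lemma H2bound n : PI^2/6 - 2 / INR (S n) <= H2 (S n) <= PI^2/6.
Proof.
  pose proof (Erel (S n)) as E. replace (2 * S n)%nat with (2*n+2)%nat in E by lia.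
  pose proof (Jnonneg n). pose proof (Jbound n). pose proof (W_rec (2*n)) as h2.
  pose proof (Wpos (S n)) as Hw. replace (2 * S n)%nat with (2*n+2)%nat in Hw by lia.
  rewrite mult_INR in h2. simpl INR in h2. rewrite S_INR. pose proof (pos_INR n).
  set (w := W (2*n+2)) in *. set (e := PI ^ 2 / 12 - H2 (S n) / 2) in *.
  assert (He0 : 0 <= e).
  { apply (Rmult_le_reg_l w). lra. rewrite Rmult_0_r. lra. }
  assert (He1 : e <= / (2 * INR n + 1)).
  { assert (W (2*n) = ((2 * INR n + 2) / (2 * INR n + 1)) * w).
    { apply (Rmult_eq_reg_l (2 * INR n + 1)). 2: lra.
      replace (2 * INR n + 1) with ((1+1) * INR n + 1) by ring. rewrite <- h2. field. lra. }
    apply (Rmult_le_reg_l w). lra.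
    replace (w * / (2 * INR n + 1)) with ((2 * INR n + 2) / (2 * INR n + 1) * w - w) by (field; lra).
    lra. }
  assert (/ (2 * INR n + 1) <= / (INR n + 1)).
  { apply Rinv_le_contravar; lra. }
  unfold e in *. split.
  - assert (2 / (INR n + 1) = 2 * (/ (INR n + 1))) by (unfold Rdiv; ring). lra.
  - lra.
Qed.

Lemma zeta2_val : zeta2 = PI^2/6.
Proof.
  unfold zeta2. apply is_series_unique.
  change (is_lim_seq (sum_n (fun n => / INR (S n) ^ 2)) (PI^2/6)).
  apply (is_lim_seq_ext (fun n => H2 (S n))).
  { intros n. unfold H2, sum_n. rewrite <- sum_n_m_S. reflexivity. }
  apply (is_lim_seq_le_le (fun n => PI^2/6 - 2 * / INR (S n)) _ (fun _ => PI^2/6)).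
  - intros n. apply H2bound.
  - assert (L : is_lim_seq (fun n => / INR (S n)) 0).
    { apply (is_lim_seq_incr_1 (fun n => / INR n) 0).
      replace (Finite 0) with (Rbar_inv p_infty) by reflexivity.
      apply is_lim_seq_inv. apply is_lim_seq_INR. discriminate. }
    assert (L2 : is_lim_seq (fun n => 2 * / INR (S n)) 0).
    { replace (Finite 0) with (Rbar_mult 2 0) by (simpl; f_equal; ring).
      apply is_lim_seq_scal_l; exact L. }
    replace (Finite (PI^2/6)) with (Finite (PI^2/6 - 0)) by (f_equal; ring).
    apply is_lim_seq_minus'. apply is_lim_seq_const. exact L2.
  - apply is_lim_seq_const.
Qed.

Ltac req := lazymatch goal with |- ?a = ?b => change (@eq R a b) end.

Definition T k := 4^k / (INR k * Binomial.C (2*k) k).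

Lemma Cpos n k : (k <= n)%nat -> 0 < Binomial.C n k.
Proof.
  intros _. unfold Binomial.C. apply Rdiv_lt_0_compat. apply INR_fact_lt_0.
  apply Rmult_lt_0_compat; apply INR_fact_lt_0.
Qed.

Lemma C_step k : Binomial.C (2*(k+1)) (k+1) =
  Binomial.C (2*k) k * (2*INR k + 2)*(2*INR k+1)/((INR k+1)^2).
Proof.
  unfold Binomial.C. replace (2*(k+1) - (k+1))%nat with (S k) by lia.
  replace (2*k-k)%nat with k by lia. replace (2*(k+1))%nat with (S (S (2*k))) by lia.
  replace (k+1)%nat with (S k) by lia. rewrite !fact_simpl. rewrite !mult_INR, !S_INR, mult_INR.
  pose proof (INR_fact_lt_0 k). pose proof (pos_INR k). simpl INR.
  req; field. repeat split; lra.
Qed.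

Lemma T_step k : (1 <= k)%nat -> T (k+1) = 2*INR k/(2*INR k+1) * T k.
Proof.
  intros Hk. unfold T. rewrite C_step. rewrite plus_INR, pow_add.
  pose proof (Cpos (2*k) k ltac:(lia)). assert (1 <= INR k) by (apply (le_INR 1); lia).
  simpl INR. req; field. repeat split; lra.
Qed.

Lemma T1 : T 1 = 2.
Proof. unfold T, Binomial.C. simpl. req; field. Qed.

Lemma WT k : W (2*k+1) = T (k+1) / 2.
Proof.
  induction k.
  - simpl. rewrite W1, T1. req; field.
  - replace (2 * S k + 1)%nat with (2*k+1+2)%nat by lia.
    pose proof (W_rec (2*k+1)) as h.
    replace (S k + 1)%nat with (k+1+1)%nat by lia.
    rewrite (T_step (k+1)) by lia.
    pose proof (pos_INR k).
    assert (W (2*k+1+2) = (INR (2*k+1) + 1) / (INR (2*k+1) + 2) * W (2*k+1)).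
    { apply (Rmult_eq_reg_l (INR (2*k+1) + 2)). rewrite h. req; field.
      rewrite plus_INR, mult_INR; simpl; lra. rewrite plus_INR, mult_INR; simpl; lra. }
    rewrite H0, IHk. rewrite !plus_INR, mult_INR. simpl INR. req; field. lra.
Qed.

Lemma H2_1 : H2 1 = 1.
Proof. rewrite H2_S, H2_0. simpl. req; field. Qed.
Lemma H2_2 : H2 2 = 1 + /4.
Proof. rewrite H2_S, H2_1. simpl. req; field. Qed.

Lemma Jodd j : J (2*j+1) = T (j+1) * (H2 (j+1) / 4 - H2 (2*j+2) + PI^2/8).
Proof.
  induction j.
  - simpl. rewrite J1, T1, H2_1, H2_2. req; field.
  - replace (2 * S j + 1)%nat with (2*j+1+2)%nat by lia.
    pose proof (J_rec (2*j+1)) as h1. pose proof (pos_INR j).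
    assert (HJ : J (2*j+1+2) = ((INR (2*j+1) + 2) * (INR (2*j+1)+1) * J (2*j+1) - 2 * W (2*j+1+2)) / (INR (2*j+1)+2)^2).
    { rewrite <- h1. req; field. rewrite plus_INR, mult_INR; simpl; lra. }
    rewrite HJ, IHj.
    replace (2*j+1+2)%nat with (2*(j+1)+1)%nat by lia. rewrite WT.
    replace (S j + 1)%nat with (j+1+1)%nat by lia.
    rewrite (T_step (j+1)) by lia.
    assert (hA : H2 (j+1+1) = H2 (j+1) + /(INR j + 2)^2).
    { replace (j+1+1)%nat with (S (j+1)) by lia. rewrite H2_S. rewrite S_INR, plus_INR. simpl INR. req; field. lra. }
    assert (hB : H2 (2 * S j + 2) = H2 (2*j+2) + /(2*INR j+3)^2 + /(2*INR j+4)^2).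
    { replace (2 * S j + 2)%nat with (S (S (2*j+2))) by lia. rewrite !H2_S.
      rewrite !S_INR, plus_INR, mult_INR. simpl INR. req; field. split; lra. }
    rewrite hA, hB. rewrite !plus_INR, mult_INR. simpl INR. req; field. repeat split; lra.
Qed.

Theorem lemma4 (k : nat) (hk : (1 <= k)%nat) :
  RInt (fun x => x ^ 2 * cos x ^ (2 * k - 1)) 0 (PI / 2) =
    / 4 * (4 ^ k * H2 k / (INR k * Binomial.C (2 * k) k))
    - 4 ^ k * H2 (2 * k) / (INR k * Binomial.C (2 * k) k)
    + 3 / 4 * zeta2 * (4 ^ k / (INR k * Binomial.C (2 * k) k)).
Proof.
  destruct k as [|j]. lia.
  change (J (2 * S j - 1) = / 4 * (4 ^ S j * H2 (S j) / (INR (S j) * Binomial.C (2 * S j) (S j)))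
    - 4 ^ S j * H2 (2 * S j) / (INR (S j) * Binomial.C (2 * S j) (S j))
    + 3 / 4 * zeta2 * (4 ^ S j / (INR (S j) * Binomial.C (2 * S j) (S j)))).
  replace (2 * S j - 1)%nat with (2*j+1)%nat by lia.
  rewrite Jodd, zeta2_val. replace (j+1)%nat with (S j) by lia.
  replace (2*j+2)%nat with (2 * S j)%nat by lia.
  unfold T. pose proof (Cpos (2 * S j) (S j) ltac:(lia)). pose proof (pos_INR j).
  rewrite S_INR. req; field. split; lra.
Qed.
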